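(* Let $K$ be a global function field, fix a prime $\infty$ of $K$, let $\mathcal{O}$ be the ring of elements of $K$ regular at every prime other than $\infty$, and let $\mathbb{F}_q$ be the full constant field of $K$ (so $\mathcal{O}^*=\mathbb{F}_q^*$). Let $\phi\in\mathcal{O}[X]$ be a polynomial of degree $d\geqslant2$ with leading coefficient in $\mathcal{O}^*$. If $\mathrm{Per}(\phi,K)$ contains at least two fixed points and a cycle of length greater than $1$, then $\mathcal{P}=\mathrm{Per}(\phi,K)$ satisfies: $\phi(\mathcal{P})\subseteq\mathcal{P}$, and the differences $y-x$, with $(x,y)$ ranging over pairs of distinct elements of $\mathcal{P}$, are all equal up to multiplication by elements of $\mathbb{F}_q^*$.
   Context: A global function field is a finite extension of $\mathbb{F}_p(t)$; its full constant field is the algebraic closure of $\mathbb{F}_p$ in $K$. $\phi$ is viewed as a map $K\to K$; $\mathrm{Per}(\phi,K)$ is the set of $x\in K$ with $\phi^n(x)=x$ for some $n\geqslant1$; a cycle is the forward orbit of a periodic point and its length is its cardinality. *)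

(* Defs.v *)
From HB Require Import structures.
From mathcomp Require Import all_boot all_order all_algebra.
Set Implicit Arguments. Unset Strict Implicit. Unset Printing Implicit Defensive.
Import Order.TTheory GRing.Theory Num.Theory.
Local Open Scope ring_scope.

(* A polynomial whose coefficients lie in the prime subfield (images of nat). *)
Definition prime_coef_poly (K : fieldType) (f : {poly K}) : Prop :=
  forall i : nat, exists n : nat, f`_i = n%:R.

Definition algebraic_over_prime (K : fieldType) (x : K) : Prop :=
  exists f : {poly K}, [/\ prime_coef_poly f, f != 0 & root f x].

Definition in_prime_rat_field (K : fieldType) (t y : K) : Prop :=
  exists a b : {poly K},
    [/\ prime_coef_poly a, prime_coef_poly b, b.[t] != 0 & y = a.[t] / b.[t]].

(* K is a global function field: char p > 0 and K is a finite extension of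
   F_p(t) for some t transcendental over F_p. *)
Definition global_function_field (K : fieldType) : Prop :=
  (exists p : nat, p \in [pchar K]) /\
  exists t : K, ~ algebraic_over_prime t /\
    exists s : seq K, forall x : K,
      exists c : 'I_(size s) -> K,
        (forall i, in_prime_rat_field t (c i)) /\
        x = \sum_(i < size s) c i * s`_i.

(* A prime (place) of K, given by its valuation ring: a proper subring V of K
   such that for every nonzero x, x \in V or x^-1 \in V. *)
Definition is_place (K : fieldType) (V : K -> Prop) : Prop :=
  V 1 /\
  (forall x y, V x -> V y -> V (x + y)) /\
  (forall x, V x -> V (- x)) /\
  (forall x y, V x -> V y -> V (x * y)) /\
  (exists x, ~ V x) /\
  (forall x, x != 0 -> V x \/ V x^-1).

Definition regular_away (K : fieldType) (Vinf : K -> Prop) (x : K) : Prop :=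
  forall V : K -> Prop, is_place V -> ~ (forall y, V y <-> Vinf y) -> V x.

Definition regular_away_unit (K : fieldType) (Vinf : K -> Prop) (x : K) : Prop :=
  x != 0 /\ regular_away Vinf x /\ regular_away Vinf x^-1.

(* Nonzero elements of the full constant field F_q (algebraic closure of F_p in K). *)
Definition const_unit (K : fieldType) (u : K) : Prop :=
  u != 0 /\ algebraic_over_prime u.

Definition periodic (K : fieldType) (phi : {poly K}) (x : K) : Prop :=
  exists n : nat, (0 < n)%N /\ iter n (fun z => phi.[z]) x = x.

(* Main.v *)
Require Import Defs.
From HB Require Import structures.
From mathcomp Require Import all_boot all_order all_algebra.
From mathcomp Require Import all_field zify ring.
From mathcomp Require classical_sets.
From Stdlib Require Import Classical.
Set Implicit Arguments. Unset Strict Implicit. Unset Printing Implicit Defensive.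
Import GRing.Theory.
Local Open Scope ring_scope.

Section Gen.
Variable K : fieldType.
Implicit Types (S : K -> Prop).

Definition sring S := [/\ S 1, (forall x y, S x -> S y -> S (x + y)),
  (forall x, S x -> S (- x)) & (forall x y, S x -> S y -> S (x * y))].

Lemma sring0 S : sring S -> S 0.
Proof. by case=> h1 hD hN _; rewrite -(subrr 1); apply: hD => //; apply: hN. Qed.

Lemma sringD S x y : sring S -> S x -> S y -> S (x + y).
Proof. by case=> _ hD _ _; apply: hD. Qed.
Lemma sringN S x : sring S -> S x -> S (- x).
Proof. by case=> _ _ hN _; apply: hN. Qed.
Lemma sringB S x y : sring S -> S x -> S y -> S (x - y).
Proof. by move=> hS hx hy; apply: sringD => //; apply: sringN. Qed.
Lemma sringM S x y : sring S -> S x -> S y -> S (x * y).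
Proof. by case=> _ _ _ hM; apply: hM. Qed.
Lemma sring1 S : sring S -> S 1.
Proof. by case. Qed.

Lemma sring_sum S (I : Type) (r : seq I) (P : pred I) (F : I -> K) :
  sring S -> (forall i, P i -> S (F i)) -> S (\sum_(i <- r | P i) F i).
Proof. move=> hS hF; apply: (big_ind S) => //; [exact: sring0 | by case: hS]. Qed.

Lemma sring_exp S x n : sring S -> S x -> S (x ^+ n).
Proof.
move=> hS hx; elim: n => [|n IH]; first exact: sring1.
by rewrite exprS; apply: sringM.
Qed.

Lemma sring_horner S (p : {poly K}) x :
  sring S -> (forall i, S p`_i) -> S x -> S p.[x].
Proof.
move=> hS hp hx; rewrite horner_coef; apply: sring_sum => // i _.
by apply: sringM => //; apply: sring_exp.
Qed.

Lemma sring_place V : is_place V -> sring V.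
Proof. by case=> h1 [hD [hN [hM _]]]; split. Qed.

Lemma sring_O Vinf : sring (regular_away Vinf).
Proof.
split.
- by move=> V hV _; case: hV.
- by move=> x y hx hy V hV hne; apply: (sringD (sring_place hV)); [apply: hx|apply: hy].
- by move=> x hx V hV hne; apply: (sringN (sring_place hV)); apply: hx.
- by move=> x y hx hy V hV hne; apply: (sringM (sring_place hV)); [apply: hx|apply: hy].
Qed.

Lemma diff_factor S (phi : {poly K}) x y : sring S -> (forall i, S phi`_i) ->
  S x -> S y -> exists D, S D /\ phi.[y] - phi.[x] = (y - x) * D.
Proof.
move=> hS hp hx hy.
exists (\sum_(i < size phi) phi`_i * \sum_(j < i) y ^+ (i.-1 - j) * x ^+ j).
split.
  apply: sring_sum => // i _; apply: sringM => //; apply: sring_sum => // j _.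
  by apply: sringM => //; apply: sring_exp.
rewrite !horner_coef -sumrB mulr_sumr; apply: eq_bigr => i _.
by rewrite -mulrBr subrXX mulrCA.
Qed.

End Gen.

Section Val.
Variables (K : fieldType) (V : K -> Prop) (hV : is_place V).

Definition mm a := V a /\ ~ V a^-1.

Lemma V0 : V 0.
Proof. exact: sring0 (sring_place hV). Qed.

Lemma Vinv x : x != 0 -> ~ V x -> V x^-1.
Proof. by case: hV => _ [_ [_ [_ [_ h]]]] /h []. Qed.

Lemma Vval x : x != 0 -> V x \/ V x^-1.
Proof. by case: hV => _ [_ [_ [_ [_ h]]]] /h. Qed.

Lemma notV_neq0 x : ~ V x -> x != 0.
Proof. by move=> h; apply/eqP => e; apply: h; rewrite e; exact: V0. Qed.

Lemma mm_neq0 a : mm a -> a != 0.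
Proof. by case=> _ h; apply/eqP => e; apply: h; rewrite e invr0; exact: V0. Qed.

Lemma mm_mul a b : mm a -> mm b -> mm (a * b).
Proof.
move=> ha hb; have b0 := mm_neq0 hb.
case: ha => ha na; case: hb => hb nb; split; first exact: sringM (sring_place hV) ha hb.
move=> h; apply: na; have -> : a^-1 = (a * b)^-1 * b by rewrite invfM mulfVK.
exact: sringM (sring_place hV) h hb.
Qed.

Lemma mm_mulV a v : mm a -> V v -> a * v = 0 \/ mm (a * v).
Proof.
move=> ha hv; have [->|v0] := eqVneq v 0; first by left; rewrite mulr0.
right; case: ha => ha na; split; first exact: sringM (sring_place hV) ha hv.
move=> h; apply: na; have -> : a^-1 = (a * v)^-1 * v by rewrite invfM mulfVK.
exact: sringM (sring_place hV) h hv.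
Qed.

Lemma mm_mulU a v : mm a -> V v -> v != 0 -> mm (a * v).
Proof.
move=> ha hv v0; case: (mm_mulV ha hv) => // /eqP; rewrite mulf_eq0 (negbTE v0) orbF.
by rewrite (negbTE (mm_neq0 ha)).
Qed.

Lemma mm_exp a k : mm a -> mm (a ^+ k.+1).
Proof.
move=> ha; elim: k => [|k IH]; first by rewrite expr1.
by rewrite exprS; apply: mm_mul.
Qed.

Lemma unit1 u : u = 0 \/ mm u -> 1 + u != 0 /\ V (1 + u)^-1.
Proof.
case=> [->|hu]; first by rewrite addr0 invr1 oner_neq0; split => //; exact: sring1 (sring_place hV).
have u0 := mm_neq0 hu; case: hu => hu nu.
have hS := sring_place hV.
have s0 : 1 + u != 0.
  apply/eqP => e; apply: nu; have -> : u = -1 by rewrite -(addKr 1 u) e addr0.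
  by rewrite invrN1; apply: sringN => //; exact: sring1.
split => //.
have q0 : u / (1 + u) != 0 by rewrite mulf_neq0 // invr_eq0.
case: (Vval q0) => h.
  have -> : (1 + u)^-1 = 1 - u / (1 + u).
    by apply: (mulIf s0); rewrite mulVf // mulrBl mul1r divfK // addrK.
  by apply: sringB => //; exact: sring1.
exfalso; apply: nu.
have -> : u^-1 = (u / (1 + u))^-1 - 1.
  by rewrite invfM invrK mulrDr mulVf // mulr1 addrK.
by apply: sringB => //; exact: sring1.
Qed.

End Val.

Lemma pow_cancel (K : fieldType) (y z : K) i k : y * z = 1 -> y ^+ i * z ^+ (i + k) = z ^+ k.
Proof. by move=> e; rewrite exprD mulrA -exprMn e expr1n mul1r. Qed.

Section Integ.
Variables (K : fieldType) (V : K -> Prop) (hV : is_place V) (phi : {poly K}).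
Hypotheses (hc : forall i, V phi`_i) (hl1 : V (lead_coef phi))
  (hl2 : V (lead_coef phi)^-1) (hs : (2 < size phi)%N).

Lemma step y : ~ V y -> mm V (phi.[y]^-1 * y).
Proof.
move=> ny; have hS := sring_place hV.
have y0 := notV_neq0 hV ny.
set z := y^-1.
have yz : y * z = 1 by rewrite mulfV.
have Vz : V z by exact: Vinv.
have mz : mm V z by split => //; rewrite /z invrK.
set d := (size phi).-1.
have hd : size phi = d.+1 by rewrite /d; case: (size phi) hs.
have d2 : (2 <= d)%N by rewrite /d; case: (size phi) hs.
set c := lead_coef phi.
have c0 : c != 0 by rewrite lead_coef_eq0 -size_poly_eq0; case: (size phi) hs.
set r := \sum_(i < d) phi`_i * z ^+ (d.-1 - i).
have Vr : V r by apply: sring_sum => // i _; apply: sringM => //; apply: sring_exp.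
have key : phi.[y] * z ^+ d = c + z * r.
  rewrite horner_coef hd big_ord_recr /= mulrDl addrC.
  congr (_ + _).
    by rewrite -mulrA -exprMn yz expr1n mulr1 /c lead_coefE hd.
  rewrite mulr_suml mulr_sumr; apply: eq_bigr => i _.
  have e : d = (i + (d.-1 - i).+1)%N by move: (ltn_ord i) d2; lia.
  by rewrite -mulrA (congr1 (GRing.exp z) e) pow_cancel // exprS mulrCA.
have mzr : z * r = 0 \/ mm V (z * r) := mm_mulV hV mz Vr.
have Vci : V c^-1 := hl2.
have ci0 : c^-1 != 0 by rewrite invr_eq0.
have mg : z * r * c^-1 = 0 \/ mm V (z * r * c^-1).
  case: mzr => [->|h]; [by left; rewrite mul0r | right; by have := mm_mulU hV h Vci ci0].
have [g0 Vgi] := unit1 hV mg.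
set g := 1 + z * r * c^-1 in g0 Vgi.
set e := c + z * r.
have ecg : e = c * g by rewrite /e /g mulrDr mulr1 mulrCA mulfV // mulr1.
have e0 : e != 0 by rewrite ecg mulf_neq0.
have Vei : V e^-1 by rewrite ecg invfM; apply: sringM.
have hphi : phi.[y] = e * y ^+ d.
  by rewrite /e -key -mulrA -exprMn (mulrC z) yz expr1n mulr1.
have -> : phi.[y]^-1 * y = z ^+ d.-1 * e^-1.
  rewrite hphi invfM -exprVn -/z.
  rewrite (congr1 (GRing.exp z) (_ : d = (d.-1).+1)); last by lia.
  rewrite exprS [RHS]mulrC -mulrA; congr (_ * _).
  by rewrite mulrC mulrA yz mul1r.
have -> : d.-1 = (d.-2).+1 by lia.
apply: (mm_mulU hV _ Vei); [exact: mm_exp | by rewrite invr_eq0].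
Qed.

Lemma step' y : ~ V y -> ~ V phi.[y] /\ mm V (phi.[y]^-1 * y).
Proof.
move=> ny; have h := step ny; split => // Vp.
have : phi.[y]^-1 != 0.
  by move: (mm_neq0 hV h); rewrite mulf_eq0 negb_or => /andP[].
rewrite invr_eq0 => p0; apply: ny.
have -> : y = phi.[y] * (phi.[y]^-1 * y) by rewrite mulrA mulfV ?mul1r.
by case: h => h _; apply: sringM (sring_place hV) Vp h.
Qed.

Lemma notV_iter x : ~ V x -> forall k,
  ~ V (iter k.+1 (fun t => phi.[t]) x) /\ mm V ((iter k.+1 (fun t => phi.[t]) x)^-1 * x).
Proof.
move=> nx; elim=> [|k [IH1 IH2]]; first exact: step'.
rewrite iterS; set w := iter k.+1 _ x in IH1 IH2 *.
have [h1 h2] := step' IH1; split => //.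
have w0 := notV_neq0 hV IH1.
have -> : phi.[w]^-1 * x = (phi.[w]^-1 * w) * (w^-1 * x) by rewrite mulrA mulfK.
by have := mm_mul hV h2 IH2.
Qed.

Lemma periodic_V x : periodic phi x -> V x.
Proof.
case=> n [n0 hn]; apply: NNPP => nx.
case: n n0 hn => // k _ hk.
have [_ h] := notV_iter nx k; rewrite hk mulVf in h; last by have := notV_neq0 hV nx.
case: h => _; rewrite invr1; apply; exact: sring1 (sring_place hV).
Qed.

End Integ.

Section Dyn.
Variables (K : fieldType) (phi : {poly K}) (S : K -> Prop).
Hypotheses (hS : sring S) (hcS : forall i, S phi`_i)
  (hper : forall x, periodic phi x -> S x).

Lemma periodic_phi x : periodic phi x -> periodic phi phi.[x].
Proof.
case=> n [n0 hn]; exists n; split => //.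
transitivity (iter n.+1 (fun t => phi.[t]) x); first by rewrite iterSr.
by rewrite iterS hn.
Qed.

Lemma periodic_iter x k : periodic phi x -> periodic phi (iter k (fun t => phi.[t]) x).
Proof.
move=> hx; elim: k => [|k IH] //=; exact: periodic_phi.
Qed.

Lemma iter_mul x n k : iter n (fun t => phi.[t]) x = x ->
  iter (k * n) (fun t => phi.[t]) x = x.
Proof.
move=> hn; elim: k => [|k IH] //.
by rewrite mulSn iterD IH hn.
Qed.

Lemma iter_diff x y : periodic phi x -> periodic phi y -> forall k, exists E, S E /\
  iter k (fun t => phi.[t]) y - iter k (fun t => phi.[t]) x = (y - x) * E.
Proof.
move=> hx hy; elim=> [|k [E [SE hE]]].
  by exists 1; split; [exact: sring1 | rewrite mulr1].
have [D [SD hD]] := diff_factor hS hcS (hper (periodic_iter k hx)) (hper (periodic_iter k hy)).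
exists (E * D); split; first exact: sringM.
by rewrite !iterS hD hE mulrA.
Qed.

Lemma unit_ratio x y : periodic phi x -> periodic phi y -> x != y ->
  (phi.[y] - phi.[x]) / (y - x) != 0 /\ S ((phi.[y] - phi.[x]) / (y - x)) /\
  S ((phi.[y] - phi.[x]) / (y - x))^-1.
Proof.
move=> hx hy nxy.
have d0 : y - x != 0 by rewrite subr_eq0 eq_sym.
have [D [SD hD]] := diff_factor hS hcS (hper hx) (hper hy).
rewrite hD mulrC mulKf //.
have hx' := hx; have hy' := hy.
case: hx' => nx [nx0 hnx]; case: hy' => ny [ny0 hny].
have hNx := iter_mul ny hnx; have hNy := iter_mul nx hny.
rewrite mulnC in hNy.
have : (0 < ny * nx)%N by rewrite muln_gt0 nx0 ny0.
case e: (ny * nx)%N => [//|N] _.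
rewrite e iterSr in hNx; rewrite e iterSr in hNy.
have [E [SE hE]] := iter_diff (periodic_phi hx) (periodic_phi hy) N.
rewrite hNx hNy hD in hE.
have DE : D * E = 1.
  by apply: (mulfI d0); rewrite mulr1 mulrA -hE.
have D0 : D != 0 by apply/eqP => D0; move: DE; rewrite D0 mul0r => /eqP; rewrite eq_sym oner_eq0.
split => //; split => //.
suff -> : D^-1 = E by [].
by rewrite -[D^-1]mulr1 -DE mulKf.
Qed.

End Dyn.

Lemma rev_horner (K : fieldType) (x y : K) (q : {poly K}) N : x * y = 1 ->
  (size q <= N.+1)%N ->
  x ^+ N * q.[y] = (\poly_(i < N.+1) q`_(N - i)).[x].
Proof.
move=> xy hq; rewrite horner_poly (horner_coef_wide y hq) mulr_sumr.
rewrite [RHS](reindex_inj rev_ord_inj) /=; apply: eq_bigr => i _.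
have hi : (i <= N)%N by rewrite -ltnS.
rewrite subSS subKn // mulrCA; congr (_ * _).
rewrite (congr1 (GRing.exp x) (esym (subnKC hi))) mulrC pow_cancel //.
by rewrite mulrC.
Qed.

Section ZornPlace.
Variables (K F : fieldType) (f : {rmorphism F -> K}) (z : K).
Hypotheses (z0 : z != 0) (hno : ~ exists q : {poly F}, z * (map_poly f q).[z] = 1).

Definition base (y : K) := exists q : {poly F}, y = (map_poly f q).[z].
Definition good (A : K -> Prop) :=
  [/\ sring A, (forall y, base y -> A y) & ~ exists a, A a /\ z * a = 1].
Definition Ext (A : K -> Prop) (x : K) (y : K) :=
  exists p : {poly K}, (forall i, A p`_i) /\ y = p.[x].

Lemma sring_base : sring base.
Proof.
split.
- by exists 1; rewrite rmorph1 -polyC1 hornerC.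
- by move=> _ _ [q1 ->] [q2 ->]; exists (q1 + q2); rewrite rmorphD hornerD.
- by move=> _ [q1 ->]; exists (- q1); rewrite rmorphN hornerN.
- by move=> _ _ [q1 ->] [q2 ->]; exists (q1 * q2); rewrite rmorphM hornerM.
Qed.

Lemma base_z : base z.
Proof. by exists 'X; rewrite map_polyX hornerX. Qed.

Lemma good_base : good base.
Proof.
split => //; first exact: sring_base.
by move=> [a [[q ->] h]]; apply: hno; exists q.
Qed.

Lemma sring_Ext A x : sring A -> sring (Ext A x).
Proof.
move=> hA; split.
- exists 1; split; last by rewrite -polyC1 hornerC.
  by move=> i; rewrite coef1; case: (i == 0); [apply: sring1 | apply: sring0].
- move=> _ _ [p [hp ->]] [q [hq ->]]; exists (p + q); split; last by rewrite hornerD.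
  by move=> i; rewrite coefD; apply: sringD.
- move=> _ [p [hp ->]]; exists (- p); split; last by rewrite hornerN.
  by move=> i; rewrite coefN; apply: sringN.
- move=> _ _ [p [hp ->]] [q [hq ->]]; exists (p * q); split; last by rewrite hornerM.
  by move=> i; rewrite coefM; apply: sring_sum => // j _; apply: sringM.
Qed.

Lemma Ext_sub A x a : sring A -> A a -> Ext A x a.
Proof.
move=> hA ha; exists a%:P; split; last by rewrite hornerC.
by move=> i; rewrite coefC; case: (i == 0) => //; apply: sring0.
Qed.

Lemma Ext_x A x : sring A -> Ext A x x.
Proof.
move=> hA; exists 'X; split; last by rewrite hornerX.
by move=> i; rewrite coefX; case: (i == 1); [apply: sring1 | apply: sring0].
Qed.

Section Max.
Variable A : K -> Prop.
Hypotheses (hgood : good A)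
  (hmax : forall B, good B -> (forall y, A y -> B y) -> forall y, B y -> A y).

Lemma hAs : sring A.
Proof. by case: hgood. Qed.

Lemma Az : A z.
Proof. by case: hgood => _ hb _; apply: hb; exact: base_z. Qed.

Lemma noinv a : A a -> z * a = 1 -> False.
Proof. by case: hgood => _ _ h ha e; apply: h; exists a. Qed.

Lemma dich x : A x \/ exists p : {poly K}, (forall i, A p`_i) /\ z * p.[x] = 1.
Proof.
case: (classic (A x)) => [|nx]; [by left | right].
apply: NNPP => nop; apply: nx.
apply: (hmax (B := Ext A x)); last by apply: Ext_x; exact: hAs.
- split; first by apply: sring_Ext; exact: hAs.
  + move=> y hy; apply: Ext_sub; first exact: hAs.
    by case: hgood => _ hb _; apply: hb.
  + by move=> [_ [[p [hp ->]] e]]; apply: nop; exists p.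
- by move=> y hy; apply: Ext_sub => //; exact: hAs.
Qed.

Lemma local a : A a -> A (1 - z * a)^-1.
Proof.
move=> ha; have hA := hAs; set s := 1 - z * a.
have hs : A s.
  by apply: sringB => //; [apply: sring1 | apply: sringM => //; exact: Az].
have s0 : s != 0.
  by apply/eqP => e; apply: (noinv ha); exact: esym (subr0_eq e).
case: (dich s^-1) => // [[p [hp hz]]].
exfalso.
have ss : s * s^-1 = 1 by rewrite mulfV.
have hrev := rev_horner ss (leqnSn (size p)).
set Q := \poly_(i < (size p).+1) p`_(size p - i) in hrev.
have hQ : A Q.[s].
  apply: sring_horner => // i; rewrite coef_poly; case: ifP => _; [exact: hp | exact: sring0].
have hsN : s ^+ (size p) = z * Q.[s] by rewrite -hrev mulrCA hz mulr1.
have pw : forall n, exists c, A c /\ s ^+ n = 1 - z * c.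
  elim=> [|n [c [hc hcs]]]; first by exists 0; split; [exact: sring0 | rewrite mulr0 subr0].
  exists (c + a - z * c * a); split.
    apply: sringB => //; first exact: sringD.
    by apply: sringM => //; apply: sringM => //; exact: Az.
  rewrite exprSr hcs /s; ring.
have [c [hc hcs]] := pw (size p).
apply: (noinv (a := Q.[s] + c)); first exact: sringD.
by rewrite mulrDr -hsN hcs subrK.
Qed.

Definition Rel x n := exists p : {poly K},
  [/\ (forall i, A p`_i), (size p <= n.+1)%N & z * p.[x] = 1].

Lemma Rel0 x : ~ Rel x 0.
Proof.
case=> p [hp sp e]; rewrite (size1_polyC sp) hornerC in e.
exact: noinv (hp 0) e.
Qed.

Lemma Klem x y n m : x * y = 1 -> Rel x n.+1 -> Rel y m -> (m <= n.+1)%N -> Rel x n.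
Proof.
move=> xy [p [hp sp zp]] [q [hq sq zq]] mn.
have hA := hAs.
have hrev := rev_horner xy sq.
have hP1 : (\poly_(i < m.+1) q`_(m - i)).[x] =
    (\poly_(i < m) q`_(m - i)).[x] + q`_0 * x ^+ m.
  by rewrite !horner_poly big_ord_recr /= subnn.
set Q := \poly_(i < m) q`_(m - i) in hP1.
set s := 1 - z * q`_0.
have hsi : A s^-1 := local (hq 0).
have s0 : s != 0.
  by apply/eqP => e; apply: (noinv (hq 0)); exact: esym (subr0_eq e).
have hxm : x ^+ m = z * s^-1 * Q.[x].
  have e : x ^+ m * s = z * Q.[x].
    have h : z * (x ^+ m * q.[y]) = x ^+ m by rewrite mulrCA zq mulr1.
    rewrite hrev hP1 in h.
    rewrite /s mulrBr mulr1 -{1}h; ring.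
  apply: (mulIf s0); rewrite e -!mulrA; congr (_ * _).
  by rewrite mulrCA mulVf // mulr1.
set c := p`_n.+1.
pose p' := (p - c *: 'X^(n.+1)) + (c * z * s^-1) *: ('X^(n.+1 - m) * Q).
have ex : x ^+ n.+1 = x ^+ (n.+1 - m) * x ^+ m by rewrite -exprD subnK.
exists p'; split.
- move=> i; rewrite /p' coefD coefB !coefZ coefXn coefXnM.
  apply: sringD => //.
    apply: sringB => //; apply: (sringM hA); first exact: (hp n.+1).
    by case: (i == n.+1); [apply: (sring1 hA) | apply: (sring0 hA)].
  apply: sringM => //.
    apply: sringM => //; apply: (sringM hA); [exact: (hp n.+1) | exact: Az].
  case: ifP => _; first exact: sring0.
  by rewrite /Q coef_poly; case: ifP => _; [exact: hq | exact: sring0].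
- apply/leq_sizeP => j hj.
  move/leq_sizeP: sp => sp.
  rewrite /p' coefD coefB !coefZ coefXn coefXnM /Q coef_poly.
  have h1 : (j < n.+1 - m)%N = false by apply/negbTE; rewrite -leqNgt; lia.
  have h2 : (j - (n.+1 - m) < m)%N = false by apply/negbTE; rewrite -leqNgt; lia.
  rewrite h1 h2 mulr0 addr0.
  move: hj; rewrite leq_eqVlt => /orP[/eqP <-|hj]; first by rewrite eqxx mulr1 subrr.
  by rewrite (sp j hj) gtn_eqF // mulr0 subr0.
- have -> : p'.[x] = p.[x].
    rewrite /p' !hornerD !hornerN !hornerZ hornerM !hornerXn ex hxm.
    ring.
  exact: zp.
Qed.

Lemma noRel k : forall n m x y, x * y = 1 -> (n + m <= k)%N -> Rel x n -> Rel y m -> False.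
Proof.
elim: k => [|k IH] n m x y xy hk hx hy.
  case: n hx hk => [hx _|n hx hk]; first by have := Rel0 hx.
  case: m hy hk => [hy _|m hy hk]; first by have := Rel0 hy.
  lia.
case: n hx hk => [hx _|n hx hk]; first by have := Rel0 hx.
case: m hy hk => [hy _|m hy hk]; first by have := Rel0 hy.
case: (leqP m.+1 n.+1) => hmn.
  have hx' := Klem xy hx hy hmn.
  apply: (IH n m.+1 x y xy _ hx' hy); lia.
have yx : y * x = 1 by rewrite mulrC.
have hy' := Klem yx hy hx (ltnW hmn).
apply: (IH n.+1 m x y xy _ hx hy'); lia.
Qed.

Lemma valA x : x != 0 -> A x \/ A x^-1.
Proof.
move=> x0; case: (dich x) => [|[p [hp e]]]; [by left|].
case: (dich x^-1) => [|[q [hq e']]]; [by right|].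
exfalso; apply: (@noRel (size p + size q)%N (size p) (size q) x x^-1).
- by rewrite mulfV.
- by [].
- by exists p; split => //; exact: leqnSn.
- by exists q; split => //; exact: leqnSn.
Qed.

End Max.

Lemma exists_place : exists V : K -> Prop, [/\ is_place V, V z & ~ V z^-1].
Proof.
pose P := fun A : K -> Prop => (forall y, ~ A y) \/ good A.
have chainP : forall FF : (K -> Prop) -> Prop, classical_sets.subset FF P ->
    classical_sets.total_on FF classical_sets.subset -> P (classical_sets.bigcup FF id).
  move=> FF sub tot.
  case: (classic (exists y, classical_sets.bigcup FF id y)) => [[y0 [X0 FX0 X0y0]]|none]; last first.
    by left => y hy; apply: none; exists y.
  have gX : forall X, FF X -> forall y, X y -> good X.
    by move=> X FX y Xy; case: (sub X FX) => // h; exfalso; exact: h y Xy.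
  have two : forall a b, classical_sets.bigcup FF id a -> classical_sets.bigcup FF id b ->
      exists X, [/\ FF X, X a & X b].
    move=> a b [Xa FXa Xaa] [Xb FXb Xbb].
    case: (tot Xa Xb FXa FXb) => h.
      by exists Xb; split => //; exact: h.
    by exists Xa; split => //; exact: h.
  have gX0 := gX X0 FX0 y0 X0y0.
  right; split.
  - split.
    + by exists X0 => //; case: gX0 => hs _ _; exact: sring1.
    + move=> a b ha hb; have [X [FX Xa Xb]] := two a b ha hb.
      by case: (gX X FX a Xa) => hs _ _; exists X => //; apply: sringD.
    + move=> a [X FX Xa]; case: (gX X FX a Xa) => hs _ _.
      by exists X => //; apply: sringN.
    + move=> a b ha hb; have [X [FX Xa Xb]] := two a b ha hb.
      by case: (gX X FX a Xa) => hs _ _; exists X => //; apply: sringM.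
  - by move=> y hy; exists X0 => //; case: gX0 => _ hb _; apply: hb.
  - move=> [a [[X FX Xa] e]]; case: (gX X FX a Xa) => _ _ h; apply: h.
    by exists a.
have [A [PA hmaxP]] := @classical_sets.Zorn_bigcup K P chainP.
have gA : good A.
  case: PA => // hemp; exfalso.
  apply: (hmaxP base); last by right; exact: good_base.
  split; first by move=> y hy; exfalso; exact: hemp y hy.
  by move=> hsub; exact: hemp z (hsub z base_z).
have hmax : forall B, good B -> (forall y, A y -> B y) -> forall y, B y -> A y.
  move=> B gB sub y By; apply: NNPP => nAy.
  apply: (hmaxP B); last by right.
  by split => // hBA; exact: nAy (hBA y By).
have hA := hAs gA.
exists A; split.
- split; first exact: sring1.
  split; first by move=> *; apply: sringD.
  split; first by move=> *; apply: sringN.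
  split; first by move=> *; apply: sringM.
  split.
    exists z^-1 => h; apply: (noinv gA h); exact: mulfV.
  by move=> x x0; apply: valA.
- exact: Az.
- by move=> h; apply: (noinv gA h); exact: mulfV.
Qed.

End ZornPlace.

Section Cst.
Variables (K : fieldType) (p : nat) (pK : p \in [pchar K]).
Definition RR := pPrimeCharType pK.
Definition ff : {rmorphism 'F_p -> RR} := in_alg RR.
Lemma ffE (a : 'F_p) : (ff a : K) = (a : nat)%:R.
Proof. exact: mulr1. Qed.
Definition Cst (u : K) := algebraicOver ff u.

Lemma Cst_prime u : Cst u -> algebraic_over_prime u.
Proof.
case=> q q0 hr; exists (map_poly ff q : {poly K}); split.
- by move=> i; exists (nat_of_ord q`_i); rewrite coef_map; exact: (ffE q`_i).
- by rewrite map_poly_eq0.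
- exact: hr.
Qed.

Lemma gen_place (w : K) : w != 0 -> ~ Cst w ->
  exists V : K -> Prop, [/\ is_place V, V w & ~ V w^-1].
Proof.
move=> w0 nw; apply: (exists_place (f := ff)) => //.
move=> [q e]; apply: nw; exists ('X * q - 1).
- apply/eqP => e0; have := congr1 (fun r => r.[0]) e0.
  by rewrite /= !hornerE => /eqP; rewrite oppr_eq0 oner_eq0.
- apply/rootP; rewrite rmorphB rmorph1 rmorphM /= (map_polyX ff).
  by rewrite hornerD hornerN hornerM hornerX -polyC1 hornerC e subrr.
Qed.

Lemma unit_cst (Vinf : K -> Prop) u : u != 0 -> regular_away Vinf u ->
  regular_away Vinf u^-1 -> Cst u.
Proof.
move=> u0 hu hui; apply: NNPP => nC.
have [V1 [hV1 V1u nV1u]] := gen_place u0 nC.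
have nCi : ~ Cst u^-1.
  by move=> h; apply: nC; rewrite -[u]invrK; apply: algebraic_inv.
have [V2 [hV2 V2u nV2u]] := gen_place (invr_neq0 u0) nCi.
rewrite invrK in nV2u.
case: (classic (forall y, V1 y <-> Vinf y)) => h1.
- have h2 : ~ (forall y, V2 y <-> Vinf y).
    by move=> h2; apply: nV2u; apply/h2/h1.
  exact: nV2u (hu V2 hV2 h2).
- exact: nV1u (hui V1 hV1 h1).
Qed.

End Cst.

Theorem lemma2p10 (K : fieldType) (Vinf : K -> Prop) (phi : {poly K}) :
  global_function_field K ->
  is_place Vinf ->
  (forall i : nat, regular_away Vinf phi`_i) ->
  (2 < size phi)%N ->
  regular_away_unit Vinf (lead_coef phi) ->
  (exists x1 x2 : K, [/\ x1 != x2, phi.[x1] = x1 & phi.[x2] = x2]) ->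
  (exists x : K, periodic phi x /\ phi.[x] != x) ->
  (forall x : K, periodic phi x -> periodic phi phi.[x]) /\
  (forall x y x' y' : K,
     periodic phi x -> periodic phi y -> x != y ->
     periodic phi x' -> periodic phi y' -> x' != y' ->
     exists u : K, const_unit u /\ y - x = u * (y' - x')).
Proof.
move=> [[p pK] _] hinf hcoef hsize [hl0 [hl1 hl2]] [a [b [nab fa fb]]] [c [pc fc]].
have hO : sring (regular_away Vinf) := sring_O Vinf.
have hper : forall x, periodic phi x -> regular_away Vinf x.
  move=> x hx V hV hne; apply: (periodic_V hV) hx => //.
  - by move=> i; apply: hcoef.
  - by apply: hl2.
split; first by move=> x; apply: periodic_phi.
have perfix : forall e, phi.[e] = e -> periodic phi e.
  by move=> e he; exists 1%N; split.
have uc : forall x y, periodic phi x -> periodic phi y -> x != y ->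
    Cst pK ((phi.[y] - phi.[x]) / (y - x)).
  move=> x y hx hy nxy; have [u0 [Ou Oui]] := unit_ratio hO hcoef hper hx hy nxy.
  exact: unit_cst u0 Ou Oui.
have key : forall x e, periodic phi x -> phi.[x] != x -> phi.[e] = e -> e != a ->
    Cst pK ((x - a) / (e - a)).
  move=> x e hx nfx fe nea.
  have xa : x != a by apply: contraNneq nfx => ->; rewrite fa.
  have xe : x != e by apply: contraNneq nfx => ->; rewrite fe.
  have ax : a != x by rewrite eq_sym.
  have ex : e != x by rewrite eq_sym.
  have hu := uc a x (perfix a fa) hx ax.
  have hw := uc e x (perfix e fe) hx ex.
  rewrite fa in hu; rewrite fe in hw.
  set u := (phi.[x] - a) / (x - a) in hu.
  set w := (phi.[x] - e) / (x - e) in hw.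
  have xa0 : x - a != 0 by rewrite subr_eq0.
  have xe0 : x - e != 0 by rewrite subr_eq0.
  have ea0 : e - a != 0 by rewrite subr_eq0.
  have eu : phi.[x] - a = u * (x - a) by rewrite /u divfK.
  have ew : phi.[x] - e = w * (x - e) by rewrite /w divfK.
  have w1 : w - 1 != 0.
    rewrite subr_eq0; apply: contra nfx => /eqP w1.
    by move: ew; rewrite w1 mul1r => /eqP; rewrite (can_eq (subrK e)) => /eqP ->.
  have h0 : u * (x - a) - w * (x - e) = e - a by rewrite -eu -ew; ring.
  have iden : (x - a) * (w - u) = (e - a) * (w - 1).
    apply/eqP; rewrite -subr_eq0.
    have -> : (x - a) * (w - u) - (e - a) * (w - 1) = (e - a) - (u * (x - a) - w * (x - e)) by ring.
    by rewrite h0 subrr.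
  have wu : w - u != 0.
    apply/eqP => wu0; move: (mulf_neq0 ea0 w1).
    by rewrite -iden wu0 mulr0 eqxx.
  have -> : (x - a) / (e - a) = (w - 1) / (w - u).
    have -> : x - a = (e - a) * (w - 1) / (w - u) by rewrite -iden mulfK.
    by rewrite [(e - a) * _]mulrC mulrAC mulfK.
  apply: algebraic_div; apply: algebraic_sub => //; exact: algebraic1.
have ba : b != a by rewrite eq_sym.
have hk : forall x, periodic phi x -> Cst pK ((x - a) / (b - a)).
  move=> x hx; case: (eqVneq phi.[x] x) => fx; last exact: key x b hx fx fb ba.
  case: (eqVneq x a) => [->|xa]; first by rewrite subrr mul0r; exact: algebraic0.
  have ca : c - a != 0 by rewrite subr_eq0; apply: contraNneq fc => ->; rewrite fa.
  have xa0 : x - a != 0 by rewrite subr_eq0.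
  have ba0 : b - a != 0 by rewrite subr_eq0.
  have h1 := key c x pc fc fx xa.
  have h2 := key c b pc fc fb ba.
  have -> : (x - a) / (b - a) = ((c - a) / (b - a)) / ((c - a) / (x - a)).
    by field; rewrite xa0 ca ba0.
  exact: algebraic_div h2 h1.
have ba0 : b - a != 0 by rewrite subr_eq0.
have dk : forall s t, t - s = ((t - a) / (b - a) - (s - a) / (b - a)) * (b - a).
  by move=> s t; rewrite mulrBl !divfK //; ring.
move=> x y x' y' hx hy nxy hx' hy' nxy'.
set N := (y - a) / (b - a) - (x - a) / (b - a).
set D := (y' - a) / (b - a) - (x' - a) / (b - a).
have N0 : N != 0.
  apply: contra_neq nxy => N0; apply/eqP; rewrite eq_sym -subr_eq0 (dk x y) -/N N0 mul0r //.
have D0 : D != 0.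
  apply: contra_neq nxy' => D0; apply/eqP; rewrite eq_sym -subr_eq0 (dk x' y') -/D D0 mul0r //.
exists (N / D); split.
  split; first by rewrite mulf_neq0 // invr_eq0.
  apply: (@Cst_prime K p pK); apply: algebraic_div; apply: algebraic_sub; exact: hk.
by rewrite (dk x y) (dk x' y') -/N -/D mulrA divfK.
Qed.
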